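(* Let $I\subset S$ be a squarefree monomial ideal generated by monomials of degree at least $2$, and let $k\ge 0$. Then $I$ is $k$-clean if and only if its Alexander dual $I^\vee$ is a $k$-decomposable monomial ideal.
   Context: $S=K[x_1,\dots,x_n]$, $K$ a field. Every such $I$ equals $I_\Delta$ (Stanley–Reisner ideal, generated by $\prod_{i\in F}x_i$ for non-faces $F$) for a simplicial complex $\Delta$ on $[n]$; its Alexander dual is $I^\vee=I_{\Delta^\vee}$ where $\Delta^\vee=\{F\subseteq[n]:[n]\setminus F\notin\Delta\}$. For a monomial $u=x_1^{a_1}\cdots x_n^{a_n}$, $\mathrm{supp}(u)=\{i:a_i>0\}$; $G(I)$ is the minimal monomial generating set. For an ideal $I$, $\min(I)$ is the set of minimal primes of $I$. A monomial $u\neq 1$ with $u\notin I$ is a cleaner monomial of $I$ if $\min(I+Su)\subseteq\min(I)$. For $k\ge 0$, the class of $k$-clean monomial ideals is defined recursively (smallest class closed under the rule): a proper monomial ideal $I$ is $k$-clean if either $I$ is prime, or $I$ has no embedded primes and there is a cleaner monomial $u$ of $I$ with $|\mathrm{supp}(u)|\le k+1$ such that $I:u$ and $I+Su$ are $k$-clean. $k$-decomposable ideals: for monomials $v=\mathbf x^{\mathbf a}$ and $w$, write $[v,w]=1$ if $x_i^{\mathbf a(i)}\nmid w$ for all $i\in\mathrm{supp}(v)$, and $[v,w]\neq1$ otherwise; set $I^v=(w\in G(I):[v,w]\ne 1)$ and $I_v=(w\in G(I):[v,w]=1)$. A monomial $v$ is a shedding monomial of $I$ if $I_v\ne 0$ and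 for each $u_i\in G(I_v)$ and each $l\in\mathrm{supp}(v)$ there exists $u_j\in G(I^v)$ with $u_j:u_i=x_l$. A monomial ideal $I$ is $k$-decomposable (recursively) if $|G(I)|=1$, or $I$ has a shedding monomial $v$ with $|\mathrm{supp}(v)|\le k+1$ such that $I^v$ and $I_v$ are $k$-decomposable. *)

(* Defs.v *)
(* Monomial ideals of S = K[x_1..x_n] are represented
   combinatorially by the set of monomials they contain. *)
From HB Require Import structures.
From mathcomp Require Import all_boot.
Set Implicit Arguments. Unset Strict Implicit. Unset Printing Implicit Defensive.

Section MonomialIdeals.
Variable n : nat.

(* A monomial x^a is its exponent vector a : 'I_n -> nat. *)
Definition mon := {ffun 'I_n -> nat}.
Definition mideal := mon -> Prop.

Definition mone : mon := [ffun _ => 0].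
Definition mmul (u v : mon) : mon := [ffun i => u i + v i].
Definition mdvd (u v : mon) : Prop := forall i, u i <= v i.
Definition supp (u : mon) : {set 'I_n} := [set i | 0 < u i].
Definition deg (u : mon) : nat := \sum_i u i.
(* x_F = prod_{i in F} x_i *)
Definition xset (F : {set 'I_n}) : mon := [ffun i => nat_of_bool (i \in F)].
Definition xvar (l : 'I_n) : mon := [ffun i => nat_of_bool (i == l)].
(* monomial colon u : w = u / gcd(u, w) *)
Definition mquot (u w : mon) : mon := [ffun i => u i - w i].

Definition is_monideal (I : mideal) : Prop := forall u v, I u -> I (mmul u v).
Definition mingen (I : mideal) (u : mon) : Prop :=
  I u /\ forall w, I w -> mdvd w u -> w = u.
Definition squarefree (I : mideal) : Prop :=
  forall u, mingen I u -> forall i, u i <= 1.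
Definition proper (I : mideal) : Prop := ~ I mone.

Definition mcolon (I : mideal) (u : mon) : mideal := fun v => I (mmul u v).
Definition madd (I : mideal) (u : mon) : mideal := fun v => I v \/ mdvd u v.

Definition mprime (F : {set 'I_n}) : mideal := fun v => exists i, i \in F /\ 0 < v i.
Definition is_prime (I : mideal) : Prop :=
  exists F, forall v, I v <-> mprime F v.
Definition contains_ideal (F : {set 'I_n}) (I : mideal) : Prop :=
  forall v, I v -> mprime F v.
Definition is_minprime (I : mideal) (F : {set 'I_n}) : Prop :=
  contains_ideal F I /\
  forall G, contains_ideal G I -> G \subset F -> G = F.
Definition is_assprime (I : mideal) (F : {set 'I_n}) : Prop :=
  exists u, forall v, mcolon I u v <-> mprime F v.
Definition no_embedded (I : mideal) : Prop :=
  forall F, is_assprime I F -> is_minprime I F.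

Definition cleaner (I : mideal) (u : mon) : Prop :=
  u <> mone /\ ~ I u /\
  forall F, is_minprime (madd I u) F -> is_minprime I F.

Inductive kclean (k : nat) : mideal -> Prop :=
| kclean_prime I : proper I -> is_prime I -> kclean k I
| kclean_step I u : proper I -> no_embedded I -> cleaner I u ->
    #|supp u| <= k.+1 -> kclean k (mcolon I u) -> kclean k (madd I u) ->
    kclean k I.

Definition br1 (v w : mon) : Prop := forall i, i \in supp v -> ~ (v i <= w i).
Definition upper (I : mideal) (v : mon) : mideal :=
  fun u => exists w, mingen I w /\ ~ br1 v w /\ mdvd w u.
Definition lower (I : mideal) (v : mon) : mideal :=
  fun u => exists w, mingen I w /\ br1 v w /\ mdvd w u.

Definition shedding (I : mideal) (v : mon) : Prop :=
  (exists w, lower I v w) /\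
  forall ui, mingen (lower I v) ui -> forall l, l \in supp v ->
    exists uj, mingen (upper I v) uj /\ mquot uj ui = xvar l.

Inductive kdec (k : nat) : mideal -> Prop :=
| kdec_one I u : (forall w, mingen I w <-> w = u) -> kdec k I
| kdec_step I v : shedding I v -> #|supp v| <= k.+1 ->
    kdec k (upper I v) -> kdec k (lower I v) -> kdec k I.

Definition complex := {set 'I_n} -> Prop.
Definition SR (D : complex) : mideal :=
  fun u => exists F, ~ D F /\ mdvd (xset F) u.
(* Delta with I = I_Delta, for squarefree I *)
Definition complex_of (I : mideal) : complex := fun F => ~ I (xset F).
Definition alex_complex (D : complex) : complex := fun F => ~ D (~: F).
Definition alexander_dual (I : mideal) : mideal :=
  SR (alex_complex (complex_of I)).

End MonomialIdeals.

(* Main.v *)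
From Stdlib Require Import Classical FunctionalExtensionality PropExtensionality.
Require Import Defs.
From mathcomp Require Import all_boot zify.
From Stdlib Require Import Lia.
Set Implicit Arguments. Unset Strict Implicit. Unset Printing Implicit Defensive.

Lemma predext (T : Type) (P Q : T -> Prop) : (forall x, P x <-> Q x) -> P = Q.
Proof. move=> H; apply: functional_extensionality => x; apply: propositional_extensionality; exact: H. Qed.

Section Basics.
Variable n : nat.
Implicit Types (u v w g h : mon n) (I J : mideal n) (F G V W : {set 'I_n}).

Lemma mdvd_refl u : mdvd u u. Proof. by move=> i. Qed.
Lemma mdvd_trans u v w : mdvd u v -> mdvd v w -> mdvd u w.
Proof. by move=> H1 H2 i; apply: leq_trans (H1 i) (H2 i). Qed.
Lemma mdvd_antisym u v : mdvd u v -> mdvd v u -> u = v.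
Proof. by move=> H1 H2; apply/ffunP => i; apply/eqP; rewrite eqn_leq H1 H2. Qed.
Lemma mmulC u v : mmul u v = mmul v u.
Proof. by apply/ffunP => i; rewrite !ffunE addnC. Qed.
Lemma mmulA u v w : mmul u (mmul v w) = mmul (mmul u v) w.
Proof. by apply/ffunP => i; rewrite !ffunE addnA. Qed.
Lemma mmul1 u : mmul u (mone n) = u.
Proof. by apply/ffunP => i; rewrite !ffunE addn0. Qed.

Lemma monideal_dvd I g u : is_monideal I -> I g -> mdvd g u -> I u.
Proof.
move=> HI Ig Hd; have -> : u = mmul g (mquot u g).
  by apply/ffunP => i; rewrite !ffunE subnKC.
exact: HI.
Qed.

Lemma deg_lt w u : mdvd w u -> w <> u -> deg w < deg u.
Proof.
move=> Hd Hne.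
have [i Hi] : exists i, w i < u i.
  apply: NNPP => Hn; apply: Hne; apply/ffunP => i; apply/eqP.
  rewrite eqn_leq Hd /=; rewrite leqNgt; apply/negP => H; apply: Hn; by exists i.
rewrite /deg (bigD1 i) //= [X in _ < X](bigD1 i) //=.
have : \sum_(j | j != i) w j <= \sum_(j | j != i) u j by apply: leq_sum => j _.
by move=> H; rewrite -addSn; apply: leq_add.
Qed.

Lemma mingen_ex I u : I u -> exists w, mingen I w /\ mdvd w u.
Proof.
move: {2}(deg u) (leqnn (deg u)) => m; elim: m u => [|m IH] u Hm Iu.
  exists u; split; last exact: mdvd_refl.
  split=> // w Iw Hd; apply: NNPP => Hne; have := deg_lt Hd Hne; lia.
case: (classic (forall w, I w -> mdvd w u -> w = u)) => H.
  by exists u; split; [split|exact: mdvd_refl].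
have [w [Iw [Hd Hne]]] : exists w, I w /\ mdvd w u /\ w <> u.
  apply: NNPP => Hn; apply: H => w Iw Hd; apply: NNPP => Hne; apply: Hn; by exists w.
have := deg_lt Hd Hne => Hlt.
have [w' [Hw' Hd']] := IH w ltac:(lia) Iw.
by exists w'; split=> //; exact: mdvd_trans Hd' Hd.
Qed.

Lemma sqf_supp I v v' : is_monideal I -> squarefree I -> I v ->
  (forall i, 0 < v i -> 0 < v' i) -> I v'.
Proof.
move=> HI Hs Iv Hpos; have [h [Hh Hd]] := mingen_ex Iv.
apply: (monideal_dvd HI (proj1 Hh)) => i.
case: (posnP (h i)) => [->//|hpos].
have := Hs h Hh i; have := Hpos i (leq_trans hpos (Hd i)); lia.
Qed.

End Basics.
Section Primes.
Variable n : nat.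
Implicit Types (u v w g h : mon n) (I J : mideal n) (F G V W : {set 'I_n}).

Lemma xvarE (i j : 'I_n) : xvar i j = (j == i). Proof. by rewrite ffunE. Qed.
Lemma xsetE F (j : 'I_n) : xset F j = (j \in F). Proof. by rewrite ffunE. Qed.

Lemma mprime_mone F : ~ mprime F (mone n).
Proof. by case=> i [_]; rewrite ffunE. Qed.

Lemma contains_prime J F G : (forall v, J v <-> mprime F v) ->
  contains_ideal G J <-> F \subset G.
Proof.
move=> HJ; split.
  move=> HG; apply/subsetP => i iF.
  have : J (xvar i) by apply/HJ; exists i; rewrite xvarE eqxx.
  move/HG => [j [jG]]; rewrite xvarE; by case: eqP => // <- _.
move=> /subsetP FG v /HJ [i [iF Hi]]; exists i; split=> //; exact: FG.
Qed.

Lemma prime_min J F : (forall v, J v <-> mprime F v) ->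
  forall G, is_minprime J G <-> G = F.
Proof.
move=> HJ G; split.
  move=> [HG Hmin]; apply/esym/Hmin.
    by apply/(contains_prime F HJ).
  by apply/(contains_prime G HJ).
move=> ->; split; first by apply/(contains_prime _ HJ).
move=> G' /(contains_prime _ HJ) H1 H2; apply/eqP; by rewrite eqEsubset H1 H2.
Qed.

Lemma ex_minprime J F : contains_ideal F J -> exists G, G \subset F /\ is_minprime J G.
Proof.
move: {2}#|F| (leqnn #|F|) => m; elim: m F => [|m IH] F Hm HF.
  exists F; split=> //; split=> // G HG GF; apply/eqP; rewrite eqEsubset GF /=.
  have := subset_leq_card GF; move: Hm; rewrite leqn0 => /eqP /cards0_eq ->.
  by rewrite sub0set.
case: (classic (forall G, contains_ideal G J -> G \subset F -> G = F)) => H.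
  by exists F; split=> //; split.
have [G [HG [GF GneF]]] : exists G, contains_ideal G J /\ G \subset F /\ G <> F.
  apply: NNPP => Hn; apply: H => G HG GF; apply: NNPP => Hne; apply: Hn; by exists G.
have : G \proper F by rewrite properEneq GF andbT; apply/eqP.
move/proper_card => Hlt.
have [G' [G'G HG']] := IH G ltac:(lia) HG.
by exists G'; split=> //; exact: subset_trans G'G GF.
Qed.

Lemma minprime_anti J F G : is_minprime J F -> is_minprime J G -> F \subset G -> F = G.
Proof. by move=> [HF _] [_ HG] FG; apply: HG. Qed.

Lemma minprime_proper J F : is_minprime J F -> ~ J (mone n).
Proof. by move=> [HF _] /HF /mprime_mone. Qed.

End Primes.
Section TDef.
Variable n : nat.
Implicit Types (F G V W : {set 'I_n}) (M : {set 'I_n} -> Prop).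

Definition lowP M V : {set 'I_n} -> Prop :=
  fun F => M F /\ (forall i, i \in F -> i \in V -> False).
Definition upP M V : {set 'I_n} -> Prop :=
  fun F => M F /\ exists i, i \in F /\ i \in V.
Definition SH M V := forall F, lowP M V F -> forall l, l \in V ->
  exists G, upP M V G /\ G \subset l |: F.

Inductive T (k : nat) : ({set 'I_n} -> Prop) -> Prop :=
| T_one M F : (forall G, M G <-> G = F) -> T k M
| T_step M V : 0 < #|V| -> #|V| <= k.+1 -> (exists F, lowP M V F) -> SH M V ->
    T k (upP M V) -> T k (lowP M V) -> T k M.

Lemma T_low k M : T k M -> forall W, (exists F, lowP M W F) -> T k (lowP M W).
Proof.
elim=> {M} [M F HM|M V V0 Vk Hlow Hsh _ IHup _ IHlow] W [F0 HF0].
  apply: (@T_one k _ F) => G; split; first by move=> [/HM].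
  move=> ->; split; first exact/HM.
  by case: HF0 => /HM -> H.
case: (classic (exists F, lowP (lowP M V) W F)) => HA; last first.
  have -> : lowP M W = lowP (upP M V) W.
    apply: predext => G; split.
      move=> [MG GW]; split=> //; split=> //.
      apply: NNPP => Hn; apply: HA; exists G; split=> //; split=> // i iG iV.
      by apply: Hn; exists i.
    by move=> [[MG _] GW].
  apply: IHup; exists F0; case: HF0 => MF0 F0W; split=> //; split=> //.
  apply: NNPP => Hn; apply: HA; exists F0; split=> //; split=> // i iG iV.
  by apply: Hn; exists i.
case: (classic (exists F, lowP (upP M V) W F)) => HB; last first.
  have -> : lowP M W = lowP (lowP M V) W.
    apply: predext => G; split.
      move=> [MG GW]; split=> //; split=> // i iG iV.
      by apply: HB; exists G; split=> //; split=> //; exists i.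
    by move=> [[MG _] GW].
  exact: IHlow.
have Hup : upP (lowP M W) (V :\: W) = lowP (upP M V) W.
  apply: predext => G; split.
    move=> [[MG GW] [i [iG]]]; rewrite in_setD => /andP [iW iV].
    by split=> //; split=> //; exists i.
  move=> [[MG [i [iG iV]]] GW]; split; first by split.
  exists i; split=> //; rewrite in_setD iV andbT; apply/negP => iW; exact: GW iG iW.
have Hlo : lowP (lowP M W) (V :\: W) = lowP (lowP M V) W.
  apply: predext => G; split.
    move=> [[MG GW] GV]; split=> //; split=> // i iG iV.
    by apply: (GV i iG); rewrite in_setD iV andbT; apply/negP => iW; exact: GW iG iW.
  move=> [[MG GV] GW]; split; first by split.
  by move=> i iG; rewrite in_setD => /andP [_ iV]; exact: GV iG iV.
apply: (@T_step k _ (V :\: W)).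
- case: HB => G [[MG [i [iG iV]]] GW]; rewrite card_gt0; apply/set0Pn; exists i.
  by rewrite in_setD iV andbT; apply/negP => iW; exact: GW iG iW.
- by apply: leq_trans Vk; apply: subset_leq_card; apply: subsetDl.
- case: HA => G HG; exists G; by rewrite Hlo.
- move=> F [[MF FW] FV'] l; rewrite in_setD => /andP [lW lV].
  have FV : forall i, i \in F -> i \in V -> False.
    move=> i iF iV; apply: (FV' i iF); rewrite in_setD iV andbT.
    by apply/negP => iW; exact: FW iF iW.
  have [G [[MG [j [jG jV]]] GlF]] := Hsh F (conj MF FV) l lV.
  have GW : forall i, i \in G -> i \in W -> False.
    move=> i iG iW; move/subsetP: GlF => /(_ i iG); rewrite in_setU1.
    case/orP => [/eqP Hil|iF]; last exact: FW iF iW.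
    by move: lW; rewrite -Hil iW.
  exists G; split=> //; split; first by split.
  exists j; split=> //; rewrite in_setD jV andbT; apply/negP => jW; exact: GW jG jW.
- rewrite Hup; apply: IHup; exact: HB.
- rewrite Hlo; apply: IHlow; exact: HA.
Qed.

End TDef.
Section CleanT.
Variable n : nat.
Implicit Types (u v w g h : mon n) (I J : mideal n) (F G V W : {set 'I_n}).

Definition Min J : {set 'I_n} -> Prop := fun F => is_minprime J F.

Lemma suppE u i : (i \in supp u) = (0 < u i). Proof. by rewrite inE. Qed.

Lemma colon_mon J u : is_monideal J -> is_monideal (mcolon J u).
Proof. by move=> HJ v w; rewrite /mcolon mmulA; apply: HJ. Qed.

Lemma add_mon J u : is_monideal J -> is_monideal (madd J u).
Proof.
move=> HJ v w [Jv|Hd]; [left; exact: HJ|right].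
by move=> i; rewrite ffunE; apply: leq_trans (Hd i) (leq_addr _ _).
Qed.

Lemma sub_colon J u v : is_monideal J -> J v -> mcolon J u v.
Proof. by move=> HJ Jv; rewrite /mcolon mmulC; apply: HJ. Qed.

Lemma colon_low J u F : is_monideal J ->
  (forall i, i \in F -> i \in supp u -> False) ->
  (is_minprime (mcolon J u) F <-> is_minprime J F).
Proof.
move=> HJ Hdis.
have back : forall F, (forall i, i \in F -> i \in supp u -> False) ->
    is_minprime J F -> is_minprime (mcolon J u) F.
  move=> F0 Hd0 [HF Hmin]; split.
    move=> v /HF [i [iF]]; rewrite ffunE => Hi; exists i; split=> //.
    move: Hi; case: (posnP (u i)) => [->//|Hu]; exfalso; apply: (Hd0 i iF).
    by rewrite suppE.
  move=> G HG GF; apply: Hmin GF => v Jv; apply: HG; exact: sub_colon.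
split; last exact: back.
move=> [HF Hmin].
have HFJ : contains_ideal F J by move=> v Jv; apply: HF; exact: sub_colon.
have [G [GF HG]] := ex_minprime HFJ.
have GD : forall i, i \in G -> i \in supp u -> False.
  by move=> i iG; apply: Hdis; move/subsetP: GF; apply.
have := Hmin G (proj1 (back G GD HG)) GF => <-; exact: HG.
Qed.

Lemma add_up J u F : is_monideal J -> is_minprime J F ->
  (exists i, i \in F /\ i \in supp u) -> is_minprime (madd J u) F.
Proof.
move=> HJ [HF Hmin] [i [iF iu]]; split.
  move=> v [/HF //|Hd]; exists i; split=> //; rewrite suppE in iu.
  exact: leq_trans iu (Hd i).
move=> G HG GF; apply: Hmin GF => v Jv; apply: HG; by left.
Qed.

Lemma add_meets J u F : is_minprime (madd J u) F -> exists i, i \in F /\ i \in supp u.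
Proof.
move=> [HF _]; have [i [iF Hi]] := HF u (or_intror (mdvd_refl u)).
by exists i; rewrite suppE.
Qed.

Lemma kclean_T k J : kclean k J -> is_monideal J -> T k (Min J).
Proof.
elim=> {J} [J _ [F HF]|J u Hprop _ [u1 [uJ Hcl]] Hsz _ IHc _ IHa] HJ.
  apply: (@T_one n k _ F) => G; exact: prime_min.
have IHc' := IHc (@colon_mon J u HJ).
have IHa' := IHa (@add_mon J u HJ).
have Hup : Min (madd J u) = upP (Min J) (supp u).
  apply: predext => F; split.
    move=> HF; split; first exact: Hcl.
    exact: (add_meets HF).
  by move=> [HF Hm]; exact: add_up HJ HF Hm.
case: (classic (exists F, lowP (Min J) (supp u) F)) => Hl; last first.
  suff <- : Min (madd J u) = Min J by [].
  rewrite Hup; apply: predext => F; split; first by case.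
  move=> HF; split=> //; apply: NNPP => Hn; apply: Hl; exists F; split=> //.
  by move=> i iF iu; apply: Hn; exists i.
have Hlow : lowP (Min (mcolon J u)) (supp u) = lowP (Min J) (supp u).
  apply: predext => F; split; move=> [HF Hd]; split=> //.
    by apply/(colon_low HJ Hd).
  by apply/(colon_low HJ Hd).
apply: (@T_step n k _ (supp u)) => //.
- rewrite card_gt0; apply/set0Pn.
  have [i Hi] : exists i, u i != 0.
    apply: NNPP => Hn; apply: u1; apply/ffunP => i; rewrite ffunE.
    by apply/eqP; apply: NNPP => Hne; apply: Hn; exists i; apply/negP.
  by exists i; rewrite suppE lt0n.
- move=> F [HF FU] l lU.
  have HF' : contains_ideal (l |: F) (madd J u).
    move=> v [Jv|Hd].
      have [i [iF Hi]] := (proj1 HF) v Jv; exists i; split=> //.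
      by rewrite in_setU1 iF orbT.
    exists l; split; first by rewrite in_setU1 eqxx.
    by rewrite suppE in lU; exact: leq_trans lU (Hd l).
  have [G [GF HG]] := ex_minprime HF'.
  exists G; split=> //; split; [exact: Hcl|exact: (add_meets HG)].
- by rewrite -Hup.
- rewrite -Hlow; apply: T_low => //.
  case: Hl => F [HF Hd]; exists F; split=> //; exact/(colon_low HJ Hd).
Qed.

End CleanT.
Section DecT.
Variable n : nat.
Implicit Types (u v w g h : mon n) (I J : mideal n) (F G V W : {set 'I_n})
  (M : {set 'I_n} -> Prop).

Definition Dm M : mideal n := fun u => exists F, M F /\ mdvd (xset F) u.
Definition antichain M := forall F G, M F -> M G -> F \subset G -> F = G.

Lemma xset_dvd F G : mdvd (xset G) (xset F) <-> G \subset F.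
Proof.
split.
  move=> H; apply/subsetP => i iG; have := H i; rewrite !xsetE iG.
  by case: (i \in F).
move=> /subsetP H i; rewrite !xsetE; case iG: (i \in G) => //=.
by rewrite (H i iG).
Qed.

Lemma xset_inj F G : xset F = xset G -> F = G.
Proof.
move=> H; apply/eqP; rewrite eqEsubset.
by apply/andP; split; apply/xset_dvd; rewrite H; exact: mdvd_refl.
Qed.

Lemma mingen_D M w : antichain M -> mingen (Dm M) w <-> exists F, M F /\ w = xset F.
Proof.
move=> HM; split.
  move=> [[F [MF Hd]] Hmin]; exists F; split=> //; apply/esym/Hmin => //.
  by exists F; split=> //; exact: mdvd_refl.
move=> [F [MF ->]]; split; first by exists F; split=> //; exact: mdvd_refl.
move=> w' [G [MG Hd]] Hd'.
have GF : G \subset F by apply/xset_dvd; exact: mdvd_trans Hd Hd'.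
have := HM G F MG MF GF => EGF; subst G.
exact: mdvd_antisym.
Qed.

Lemma br1_xset v F : br1 v (xset F) <->
  (forall i, i \in F -> i \in [set i | v i == 1] -> False).
Proof.
split.
  move=> H i iF; rewrite inE => /eqP vi; apply: (H i); first by rewrite suppE vi.
  by rewrite xsetE iF vi.
move=> H i; rewrite suppE xsetE => vpos Hle.
have iF : i \in F by move: Hle; case: (i \in F) => //=; lia.
by apply: (H i iF); rewrite inE eqn_leq vpos andbT; move: Hle; rewrite iF.
Qed.

Lemma upper_D M v : antichain M -> upper (Dm M) v = Dm (upP M [set i | v i == 1]).
Proof.
move=> HM; apply: predext => u; split.
  move=> [w [/(mingen_D _ HM) [F [MF ->]] [Hb Hd]]]; exists F; split=> //.
  split=> //; apply: NNPP => Hn; apply: Hb; apply/br1_xset => i iF iV.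
  by apply: Hn; exists i.
move=> [F [[MF [i [iF iV]]] Hd]]; exists (xset F); split.
  by apply/(mingen_D _ HM); exists F.
split=> //; move/br1_xset => Hb; exact: Hb iF iV.
Qed.

Lemma lower_D M v : antichain M -> lower (Dm M) v = Dm (lowP M [set i | v i == 1]).
Proof.
move=> HM; apply: predext => u; split.
  move=> [w [/(mingen_D _ HM) [F [MF ->]] [Hb Hd]]]; exists F; split=> //.
  by split=> //; apply/br1_xset.
move=> [F [[MF Hb] Hd]]; exists (xset F); split.
  by apply/(mingen_D _ HM); exists F.
by split=> //; apply/br1_xset.
Qed.

Lemma antichain_up M V : antichain M -> antichain (upP M V).
Proof. by move=> HM F G [MF _] [MG _]; apply: HM. Qed.
Lemma antichain_low M V : antichain M -> antichain (lowP M V).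
Proof. by move=> HM F G [MF _] [MG _]; apply: HM. Qed.

Lemma kdec_ne k I : kdec k I -> exists u, I u.
Proof.
elim=> {I} [I u Hu|I v Hsh _ _ _ _ _].
  by exists u; have [] := (proj2 (Hu u) erefl).
case: Hsh => [[w Hw] _]; case: Hw => w0 [Hw _].
by exists w0; case: Hw.
Qed.

Lemma xset_one V : [set i | xset V i == 1] = V.
Proof. by apply/setP => i; rewrite inE xsetE; case: (i \in V). Qed.
Lemma supp_xset V : supp (xset V) = V.
Proof. by apply/setP => i; rewrite suppE xsetE; case: (i \in V). Qed.

Lemma mquot_xset F G (l : 'I_n) : l \in G -> l \notin F -> G \subset l |: F ->
  mquot (xset G) (xset F) = xvar l.
Proof.
move=> lG lF /subsetP GlF; apply/ffunP => i; rewrite !ffunE.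
case: (eqVneq i l) => [->|il]; first by rewrite lG (negbTE lF).
case iG: (i \in G) => //=.
by have := GlF i iG; rewrite in_setU1 (negbTE il) /= => ->.
Qed.

Lemma mquot_xset_sub F G (l : 'I_n) : mquot (xset G) (xset F) = xvar l ->
  G \subset l |: F.
Proof.
move=> H; apply/subsetP => i iG; rewrite in_setU1.
have := congr1 (fun f : mon n => f i) H; rewrite !ffunE iG.
by case: (i \in F); case: (i == l).
Qed.

Lemma T_kdec k M : T k M -> antichain M -> kdec k (Dm M).
Proof.
elim=> {M} [M F HM|M V V0 Vk [F0 HF0] Hsh _ IHup _ IHlow] HA.
  apply: (@kdec_one n k _ (xset F)) => w; rewrite (mingen_D _ HA); split.
    by move=> [G [/HM -> ->]].
  by move=> ->; exists F; split=> //; exact/HM.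
apply: (@kdec_step n k _ (xset V)).
- split.
    exists (xset F0); rewrite lower_D // xset_one; exists F0; split=> //.
  move=> ui; rewrite lower_D // xset_one.
  move/(mingen_D _ (antichain_low (V:=V) HA)) => [F [HF ->]] l.
  rewrite supp_xset => lV.
  have [G [HG GlF]] := Hsh F HF l lV.
  exists (xset G); split.
    by rewrite upper_D // xset_one; apply/(mingen_D _ (antichain_up (V:=V) HA)); exists G.
  apply: mquot_xset => //.
    case: HG => _ [j [jG jV]]; move/subsetP: GlF => /(_ j jG); rewrite in_setU1.
    case/orP => [/eqP <- //|jF]; exfalso; exact: (proj2 HF) jF jV.
  by apply/negP => lF; exact: (proj2 HF) lF lV.
- by rewrite supp_xset.
- by rewrite upper_D // xset_one; apply: IHup; exact: antichain_up.
- by rewrite lower_D // xset_one; apply: IHlow; exact: antichain_low.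
Qed.

Lemma kdec_T k I : kdec k I -> forall M, antichain M -> I = Dm M -> T k M.
Proof.
elim=> {I} [I u Hu|I v Hsh0 Hsz Hup IHup _ IHlow] M HA EI; subst I.
  have [F [MF EF]] : exists F, M F /\ u = xset F.
    by apply/(mingen_D _ HA); apply/Hu.
  apply: (@T_one n k _ F) => G; split; last by move=> ->.
  move=> MG; apply: xset_inj; rewrite -EF; apply/Hu.
  by apply/(mingen_D _ HA); exists G.
case: Hsh0 => [[w0 Hw0] Hsh].
set V := [set i | v i == 1].
have EU := upper_D v HA; have EL := lower_D v HA.
apply: (@T_step n k _ V).
- have [u' Hu'] := kdec_ne Hup; rewrite EU in Hu'.
  case: Hu' => F [[_ [i [_ iV]]] _]; rewrite card_gt0; apply/set0Pn; by exists i.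
- apply: leq_trans Hsz; apply: subset_leq_card; apply/subsetP => i.
  by rewrite inE suppE => /eqP ->.
- by move: Hw0; rewrite EL => [[F [HF _]]]; exists F.
- move=> F HF l lV.
  have Hui : mingen (lower (Dm M) v) (xset F).
    by rewrite EL; apply/(mingen_D _ (antichain_low (V:=V) HA)); exists F.
  have lsupp : l \in supp v by move: lV; rewrite inE suppE => /eqP ->.
  have [uj [Huj Hq]] := Hsh _ Hui l lsupp.
  move: Huj; rewrite EU => /(mingen_D _ (antichain_up (V:=V) HA)) [G [HG EG]]; subst uj.
  by exists G; split=> //; exact: mquot_xset_sub Hq.
- apply: IHup; [exact: antichain_up|exact: EU].
- apply: IHlow; [exact: antichain_low|exact: EL].
Qed.

End DecT.
Section Sqf.
Variable n : nat.
Implicit Types (u v w g h : mon n) (I J : mideal n) (F G V W : {set 'I_n})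
  (M : {set 'I_n} -> Prop).

Lemma min_antichain J : antichain (Min J).
Proof. by move=> F G HF HG FG; exact: (minprime_anti HF HG FG). Qed.

Lemma sqf_notin I v : is_monideal I -> squarefree I -> ~ I v ->
  exists F, Min I F /\ ~ mprime F v.
Proof.
move=> HI Hs Iv.
have HG : contains_ideal [set i | v i == 0] I.
  move=> w Iw; apply: NNPP => Hn; apply: Iv; apply: (sqf_supp HI Hs Iw) => i wi.
  rewrite lt0n; apply/negP => /eqP vi; apply: Hn; exists i; split=> //.
  by rewrite inE vi.
have [F [FG HF]] := ex_minprime HG.
exists F; split=> // [[i [iF vi]]].
by move/subsetP: FG => /(_ i iF); rewrite inE => /eqP vi0; rewrite vi0 in vi.
Qed.

Lemma sqf_noemb I : is_monideal I -> squarefree I -> no_embedded I.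
Proof.
move=> HI Hs F [w Hw].
have HF : contains_ideal F I by move=> v Iv; apply/Hw; exact: sub_colon.
have wF : forall j, j \in F -> w j = 0.
  move=> j jF; apply/eqP; rewrite -leqn0 leqNgt; apply/negP => wj.
  have : mcolon I w (xvar j) by apply/Hw; exists j; rewrite xvarE eqxx.
  rewrite /mcolon => H.
  have : I (mmul w (mone n)).
    rewrite mmul1; apply: (sqf_supp HI Hs H) => i; rewrite ffunE xvarE.
    by case: (eqVneq i j) => [->|_] //; rewrite addn0.
  by move/Hw; apply: mprime_mone.
split=> // G HG GF; apply/eqP; rewrite eqEsubset GF /=; apply/subsetP => i iF.
have : mcolon I w (xvar i) by apply/Hw; exists i; rewrite xvarE eqxx.
move/HG => [j [jG]]; rewrite ffunE xvarE.
move/subsetP: GF => /(_ j jG) /wF ->; rewrite add0n.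
by case: eqP => // <- _.
Qed.

Lemma contains_xsetC I F : is_monideal I -> squarefree I ->
  (~ I (xset (~: F)) <-> contains_ideal F I).
Proof.
move=> HI Hs; split.
  move=> HF w Iw; apply: NNPP => Hn; apply: HF; apply: (sqf_supp HI Hs Iw) => i wi.
  rewrite xsetE in_setC; case iF: (i \in F) => //=; exfalso; apply: Hn; by exists i.
move=> HF /HF [i [iF]]; by rewrite xsetE in_setC iF.
Qed.

Lemma dual_D I : is_monideal I -> squarefree I -> alexander_dual I = Dm (Min I).
Proof.
move=> HI Hs; apply: predext => u; split.
  move=> [F [HF Hd]].
  have HF' : contains_ideal F I.
    apply/(contains_xsetC _ HI Hs) => H; apply: HF => H2; exact: H2 H.
  have [G [GF HG]] := ex_minprime HF'; exists G; split=> //.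
  apply: mdvd_trans Hd; exact/xset_dvd.
move=> [F [[HF _] Hd]]; exists F; split=> //.
move/(contains_xsetC _ HI Hs): HF => H H2; exact: H2 H.
Qed.

Lemma sqf_colon I u : is_monideal I -> squarefree I -> squarefree (mcolon I u).
Proof.
move=> HI Hs g [Hg Hmin] i; rewrite leqNgt; apply/negP => g2.
pose g' : mon n := [ffun j => if j == i then g j - 1 else g j].
have Hg' : mcolon I u g'.
  rewrite /mcolon; apply: (sqf_supp HI Hs Hg) => j; rewrite !ffunE.
  case: (eqVneq j i) => [->|_] //; lia.
have Hd : mdvd g' g by move=> j; rewrite ffunE; case: (j == i) => //; exact: leq_subr.
have := congr1 (fun f : mon n => f i) (Hmin g' Hg' Hd); rewrite ffunE eqxx /=.
lia.
Qed.

Lemma sqf_add I V : is_monideal I -> squarefree I -> squarefree (madd I (xset V)).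
Proof.
move=> HI Hs g [[Ig|Hd] Hmin] i.
  have [h [Hh Hhd]] := mingen_ex Ig.
  have <- := Hmin h (or_introl (proj1 Hh)) Hhd; exact: Hs.
have <- := Hmin (xset V) (or_intror (mdvd_refl _)) Hd.
by rewrite xsetE; case: (i \in V).
Qed.

Lemma colon_low_sqf I V : is_monideal I -> squarefree I ->
  Min (mcolon I (xset V)) = lowP (Min I) V.
Proof.
move=> HI Hs.
have Hsupp : forall F, (forall i, i \in F -> i \in V -> False) ->
    forall i, i \in F -> i \in supp (xset V) -> False.
  by move=> F H i iF; rewrite supp_xset; exact: H.
apply: predext => F; split; last first.
  by move=> [HF Hd]; apply/(colon_low HI (Hsupp F Hd)).
move=> HF.
have Hd : forall i, i \in F -> i \in V -> False.
  move=> j jF jV; case: (HF) => HFc Hmin.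
  have HF' : contains_ideal (F :\ j) (mcolon I (xset V)).
    move=> v Iv.
    pose v' : mon n := [ffun i => if i \in V then 0 else v i].
    have Iv' : mcolon I (xset V) v'.
      rewrite /mcolon; apply: (sqf_supp HI Hs Iv) => i; rewrite !ffunE.
      by case: (i \in V).
    have [i [iF]] := HFc v' Iv'; rewrite ffunE.
    case iV: (i \in V) => // vi; exists i; split=> //.
    rewrite in_setD1 iF andbT; apply/negP => /eqP Eij; by rewrite Eij jV in iV.
  have := Hmin (F :\ j) HF' (subD1set F j) => EF.
  by move: jF; rewrite -EF in_setD1 eqxx.
split=> //; exact/(colon_low HI (Hsupp F Hd)).
Qed.

Lemma T_kclean k M : T k M -> forall I, is_monideal I -> squarefree I ->
  Min I = M -> kclean k I.
Proof.
elim=> {M} [M F HM|M V V0 Vk [F0 HF0] Hsh _ IHup _ IHlow] I HI Hs EM; subst M.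
  apply: kclean_prime; first exact: (@minprime_proper _ I F (proj2 (HM F) erefl)).
  exists F => v; split.
    by move=> Iv; apply: (proj1 (proj2 (HM F) erefl)).
  move=> Hv; apply: NNPP => Iv; have [G [HG Hn]] := sqf_notin HI Hs Iv.
  by move/HM: HG => EG; subst G.
have Hcl : forall F, Min (madd I (xset V)) F -> Min I F.
  move=> F HF.
  have HFI : contains_ideal F I by move=> v Iv; apply: (proj1 HF); left.
  have [G [GF HG]] := ex_minprime HFI.
  case: (classic (exists i, i \in G /\ i \in V)) => HGV.
    have HG' : Min (madd I (xset V)) G by apply: add_up => //; rewrite supp_xset.
    by rewrite -(minprime_anti HG' HF GF).
  have Hlow : lowP (Min I) V G.
    by split=> // i iG iV; apply: HGV; exists i.
  have [l [lF]] := add_meets HF; rewrite supp_xset => lV.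
  have [G' [[MG' HG'V] G'lG]] := Hsh G Hlow l lV.
  have G'F : G' \subset F.
    apply: subset_trans G'lG _; apply/subsetP => i; rewrite in_setU1.
    by case/orP => [/eqP ->//|iG]; move/subsetP: GF; apply.
  have HG'' : Min (madd I (xset V)) G' by apply: add_up => //; rewrite supp_xset.
  by rewrite -(minprime_anti HG'' HF G'F).
have Hup : Min (madd I (xset V)) = upP (Min I) V.
  apply: predext => F; split.
    move=> HF; split; first exact: Hcl.
    by have := add_meets HF; rewrite supp_xset.
  by move=> [HF HFV]; apply: add_up => //; rewrite supp_xset.
apply: (@kclean_step n k I (xset V)).
- exact: (@minprime_proper _ I F0 (proj1 HF0)).
- exact: sqf_noemb.
- split.
    have [i iV] : exists i, i \in V by apply/set0Pn; rewrite -card_gt0.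
    move=> E; have := congr1 (fun f : mon n => f i) E; by rewrite !ffunE iV.
  split; last exact: Hcl.
  move=> Iu; have [i [iF]] := (proj1 (proj1 HF0)) _ Iu; rewrite xsetE lt0b => iV.
  exact: (proj2 HF0) i iF iV.
- by rewrite supp_xset.
- apply: IHlow => //; [exact: colon_mon|exact: sqf_colon|exact: colon_low_sqf].
- apply: IHup => //; [exact: add_mon|exact: sqf_add].
Qed.

End Sqf.

Theorem corollary4p4 (n k : nat) (I : mideal n) :
  is_monideal I -> squarefree I -> (forall u, mingen I u -> 2 <= deg u) ->
  kclean k I <-> kdec k (alexander_dual I).
Proof.
move=> HI Hs _; rewrite (dual_D HI Hs); split.
  move=> Hc; apply: T_kdec; [exact: kclean_T Hc HI|exact: min_antichain].
move=> Hd; apply: (T_kclean (kdec_T Hd (@min_antichain n I) erefl)) => //.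
Qed.
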